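(* Let $\Omega\subset\mathbb{R}^n$ be bounded. If $\varphi\in\Phi_{\mathrm w}(\Omega)$ satisfies condition (A1), then it satisfies conditions (A0) and (A2).
   Context: A function $f:[0,\infty)\to[0,\infty]$ is $a$-almost increasing ($a\ge1$) if $f(s)\le a f(t)$ for all $s\le t$. A function $\varphi:\Omega\times[0,\infty)\to[0,\infty]$ is a weak $\Phi$-function, $\varphi\in\Phi_{\mathrm w}(\Omega)$, if for a.e. $x\in\Omega$: $x\mapsto\varphi(x,|f(x)|)$ is measurable for every measurable $f:\Omega\to\mathbb{R}$; $t\mapsto\varphi(x,t)$ is increasing (non-decreasing); $\varphi(x,0)=\lim_{t\to0^+}\varphi(x,t)=0$ and $\lim_{t\to\infty}\varphi(x,t)=\infty$; and $t\mapsto\varphi(x,t)/t$ is $a$-almost increasing on $(0,\infty)$ with $a\ge1$ independent of $x$. The left-inverse is $\varphi^{-1}(x,\tau):=\inf\{t\ge0:\varphi(x,t)\ge\tau\}$. Condition (A0): there exists $\beta\in(0,1]$ with $\beta\le\varphi^{-1}(x,1)\le1/\beta$ for a.e. $x\in\Omega$. Condition (A1): there exists $\beta\in(0,1]$ such that for every ball $B\subset\mathbb{R}^n$ and a.e. $x,y\in\Omega\cap B$, $\beta\varphi^{-1}(x,\tau)\le\varphi^{-1}(y,\tau)$ for all $\tau\in[1,1/|B|]$. Condition (A2): for every $\sigma>0$ there exist $\beta\in(0,1]$ and $h\in L^1(\Omega)\cap L^\infty(\Omega)$, $h\ge0$, such that for a.e. $x,y\in\Omega$, $\beta\varphi^{-1}(x,\tau)\le\varphi^{-1}(y,\tau+h(x)+h(y))$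 for all $\tau\in[0,\sigma]$. *)

(* Defs.v *)
From HB Require Import structures.
From mathcomp Require Import all_boot all_order all_algebra.
From mathcomp Require Import all_classical all_reals all_analysis.

Set Implicit Arguments.
Unset Strict Implicit.
Unset Printing Implicit Defensive.

Import Order.TTheory GRing.Theory Num.Theory.
Local Open Scope classical_set_scope.
Local Open Scope ring_scope.

Section GenOrlicz.
Variables (R : realType) (n : nat).
Notation Rn := 'rV[R]_n.

Definition sqnorm (x : Rn) : R := \sum_(i < n) (x ord0 i) ^+ 2.

Definition eball (c : Rn) (r : R) : set Rn :=
  [set y | sqnorm (y - c) < r ^+ 2].

Definition is_ball (B : set Rn) : Prop :=
  exists (c : Rn) (r : R), 0 < r /\ B = eball c r.

Definition bounded_Rn (A : set Rn) : Prop :=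
  exists M : R, forall x, A x -> sqnorm x <= M.

Definition box (a b : Rn) : set Rn :=
  [set x | forall i : 'I_n, a ord0 i <= x ord0 i < b ord0 i].

Definition boxvol (a b : Rn) : R :=
  \prod_(i < n) Num.max (b ord0 i - a ord0 i) 0.

Definition leb_outer (A : set Rn) : \bar R :=
  ereal_inf [set s : \bar R | exists a b : nat -> Rn,
      A `<=` \bigcup_k box (a k) (b k) /\
      s = (\sum_(k <oo) (boxvol (a k) (b k))%:E)%E].

Definition leb_measurable (A : set Rn) : Prop :=
  forall E : set Rn,
    leb_outer E = (leb_outer (E `&` A) + leb_outer (E `&` ~` A))%E.

Definition ae_in (Om : set Rn) (P : Rn -> Prop) : Prop :=
  exists N : set Rn, leb_outer N = 0%E /\
    forall x, Om x -> ~ N x -> P x.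

Definition ae_in2 (Om : set Rn) (P : Rn -> Rn -> Prop) : Prop :=
  exists N : set Rn, leb_outer N = 0%E /\
    forall x y, Om x -> Om y -> ~ N x -> ~ N y -> P x y.

Definition emeasurable_on (Om : set Rn) (g : Rn -> \bar R) : Prop :=
  forall a : R, leb_measurable (Om `&` [set x | (g x < a%:E)%E]).

Definition measurable_on (Om : set Rn) (f : Rn -> R) : Prop :=
  emeasurable_on Om (fun x => (f x)%:E).

(** Lebesgue integral over Om of a nonnegative function (layer-cake form:
    int_Om g = int_0^oo |{x in Om : g x > t}| dt) *)
Definition leb_integral_nonneg (Om : set Rn) (g : Rn -> R) : \bar R :=
  (\int[lebesgue_measure]_(t in [set t : R | (0 < t)%R])
      leb_outer (Om `&` [set x | (t < g x)%R]))%E.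

Definition L1_on (Om : set Rn) (h : Rn -> R) : Prop :=
  measurable_on Om h /\
  (leb_integral_nonneg Om (fun x => `|h x|%R) < +oo)%E.

Definition Linfty_on (Om : set Rn) (h : Rn -> R) : Prop :=
  measurable_on Om h /\
  exists M : R, ae_in Om (fun x => `|h x| <= M).

Definition almost_increasing_on (a : R) (D : set R) (f : R -> \bar R) : Prop :=
  forall s t, D s -> D t -> s <= t -> (f s <= a%:E * f t)%E.

(** weak Phi-functions on Om; phi x t is only relevant for t >= 0 *)
Definition weak_Phi (Om : set Rn) (phi : Rn -> R -> \bar R) : Prop :=
  (forall x t, Om x -> 0 <= t -> (0 <= phi x t)%E) /\
  (forall f : Rn -> R, measurable_on Om f ->
      emeasurable_on Om (fun x => phi x `|f x|)) /\
  ae_in Om (fun x =>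
     (forall s t, 0 <= s -> s <= t -> (phi x s <= phi x t)%E) /\
     phi x 0 = 0%E /\
     (forall e : R, 0 < e -> exists d : R, 0 < d /\
         forall t, 0 < t -> t < d -> (phi x t <= e%:E)%E) /\
     (forall M : R, exists T : R, forall t, T <= t -> (M%:E <= phi x t)%E)) /\
  exists a : R, 1 <= a /\
    ae_in Om (fun x => almost_increasing_on a [set t | 0 < t]
                         (fun t => phi x t * (t^-1)%:E)%E).

Definition phi_inv (phi : Rn -> R -> \bar R) (x : Rn) (tau : R) : \bar R :=
  ereal_inf [set t%:E | t in [set t : R | 0 <= t /\ (tau%:E <= phi x t)%E]].

Definition cond_A0 (Om : set Rn) (phi : Rn -> R -> \bar R) : Prop :=
  exists beta : R, 0 < beta <= 1 /\
    ae_in Om (fun x => (beta%:E <= phi_inv phi x 1 <= (beta^-1)%:E)%E).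

(** tau in [1, 1/|B|] is written 1 <= tau and tau * |B| <= 1 *)
Definition cond_A1 (Om : set Rn) (phi : Rn -> R -> \bar R) : Prop :=
  exists beta : R, 0 < beta <= 1 /\
    forall B : set Rn, is_ball B ->
      ae_in2 (Om `&` B) (fun x y => forall tau : R,
        1 <= tau -> (tau%:E * leb_outer B <= 1%:E)%E ->
        (beta%:E * phi_inv phi x tau <= phi_inv phi y tau)%E).

Definition cond_A2 (Om : set Rn) (phi : Rn -> R -> \bar R) : Prop :=
  forall sigma : R, 0 < sigma ->
    exists (beta : R) (h : Rn -> R),
      0 < beta <= 1 /\ L1_on Om h /\ Linfty_on Om h /\
      (forall x, Om x -> 0 <= h x) /\
      ae_in2 Om (fun x y => forall tau : R, 0 <= tau -> tau <= sigma ->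
        (beta%:E * phi_inv phi x tau
           <= phi_inv phi y (tau + h x + h y))%E).

End GenOrlicz.

(* Main.v *)
Require Import Defs.
From HB Require Import structures.
From mathcomp Require Import all_boot all_order all_algebra.
From mathcomp Require Import all_classical all_reals all_analysis.
Import Order.TTheory GRing.Theory Num.Theory numFieldNormedType.Exports.
Local Open Scope classical_set_scope.
Local Open Scope ring_scope.
From mathcomp Require Import lra ring.
Set Implicit Arguments.
Unset Strict Implicit.
Section P1.
Variables (R : realType) (n : nat).
Notation Rn := 'rV[R]_n.

Lemma boxvol_ge0 (a b : Rn) : 0 <= boxvol a b.
Proof. by apply: prodr_ge0 => i _; rewrite le_max lexx orbT. Qed.

Lemma leb_outer_ge0 (A : set Rn) : (0 <= leb_outer A)%E.
Proof.
apply: le_ereal_inf_tmp => s [a [b [_ ->]]].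
by apply: nneseries_ge0 => k _ _; rewrite lee_fin boxvol_ge0.
Qed.

Lemma leb_outer_cover (A : set Rn) (a b : nat -> Rn) :
  A `<=` \bigcup_k box (a k) (b k) ->
  (leb_outer A <= \sum_(k <oo) (boxvol (a k) (b k))%:E)%E.
Proof. by move=> h; apply: ereal_inf_lbound; exists a, b. Qed.

Lemma interleave_le (f g c : nat -> \bar R) :
  (forall k, 0 <= f k)%E -> (forall k, 0 <= g k)%E ->
  (forall k, c k = if odd k then g k./2 else f k./2) ->
  (\sum_(k <oo) c k
    <= \sum_(k <oo) f k + \sum_(k <oo) g k)%E.
Proof.
move=> f0 g0 hc; rewrite -nneseriesD //.
have c0 : forall k, (0 <= c k)%E by move=> k; rewrite hc; case: ifP.
have E : forall N, (\sum_(0 <= k < N.*2) c k = \sum_(0 <= k < N) (f k + g k))%E.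
  elim=> [|N IH]; first by rewrite !big_geq.
  rewrite doubleS !big_nat_recr //= IH !hc /=. idtac.
  by rewrite odd_double /= doubleK uphalf_double addeA.
apply: lime_le; first exact: is_cvg_nneseries.
near=> N.
apply: (le_trans _ (_ : \sum_(0 <= k < N.*2) c k <= _)%E).
  rewrite (big_cat_nat _ (n:=N) (m:=0) (p:=N.*2)) //=; last by rewrite -addnn leq_addr.
  by rewrite leeDl // sume_ge0.
rewrite E; apply: nneseries_lim_ge => k _ _; exact: adde_ge0.
Unshelve. all: by end_near.
Qed.

Lemma null_union (A B : set Rn) : leb_outer A = 0%E -> leb_outer B = 0%E ->
  leb_outer (A `|` B) = 0%E.
Proof.
move=> hA hB; apply/le_anti; rewrite leb_outer_ge0 andbT.
apply/lee_addgt0Pr => e e0; rewrite add0e.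
have e20 : 0 < e / 2 by rewrite divr_gt0.
have : (leb_outer A < (e/2)%:E)%E by rewrite hA lte_fin.
move=> /ereal_inf_lt [s [a1 [b1 [covA ->]]] ha].
have : (leb_outer B < (e/2)%:E)%E by rewrite hB lte_fin.
move=> /ereal_inf_lt [s' [a2 [b2 [covB ->]]] hb].
pose a k := if odd k then a2 k./2 else a1 k./2.
pose b k := if odd k then b2 k./2 else b1 k./2.
apply: (le_trans (@leb_outer_cover _ a b _)).
  move=> x [/covA [k _ hk]|/covB [k _ hk]].
    by exists k.*2 => //; rewrite /a /b odd_double doubleK.
  exists k.*2.+1 => //; rewrite /a /b /= odd_double /=.
  by rewrite uphalf_double.
apply: le_trans.
  apply: (@interleave_le (fun k => (boxvol (a1 k) (b1 k))%:E)
                        (fun k => (boxvol (a2 k) (b2 k))%:E)).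
  - by move=> k; rewrite lee_fin boxvol_ge0.
  - by move=> k; rewrite lee_fin boxvol_ge0.
  - by move=> k; rewrite /a /b; case: ifP.
apply: le_trans (ltW (lteD ha hb)) _.
rewrite -EFinD lee_fin -splitr. done.
Qed.

Lemma boxvol0 (n0 : (0 < n)%N) (a : Rn) : boxvol a a = 0.
Proof. by rewrite /boxvol (bigD1 (Ordinal n0)) //= subrr maxxx mul0r. Qed.

Lemma leb_outer_box (n0 : (0 < n)%N) (A : set Rn) (a b : Rn) :
  A `<=` box a b -> (leb_outer A <= (boxvol a b)%:E)%E.
Proof.
move=> hA.
pose a' k := if k == 0%N then a else 0.
pose b' k := if k == 0%N then b else 0.
apply: (le_trans (@leb_outer_cover _ a' b' _)).
  by move=> x /hA hx; exists 0%N.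
rewrite le_eqVlt; apply/orP; left; apply/eqP.
apply: lim_near_cst => //; near=> N.
rewrite big_ltn; last by near: N; exists 1%N.
rewrite big1_seq ?adde0 // => k /andP [_]; rewrite mem_index_iota => /andP [k1 _].
by rewrite /a' /b' gtn_eqF // boxvol0.
Unshelve. all: by end_near.
Qed.

Lemma leb_outer0 (n0 : (0 < n)%N) : leb_outer (@set0 Rn) = 0%E.
Proof.
apply/le_anti; rewrite leb_outer_ge0 andbT.
by have := @leb_outer_box n0 set0 0 0 (@sub0set _ _); rewrite boxvol0.
Qed.
End P1.

Lemma leb_outer_dim0 (R : realType) (A : set 'rV[R]_0) : (1 <= leb_outer A)%E.
Proof.
apply: le_ereal_inf_tmp => s [a [b [_ ->]]].
apply: le_trans (@nneseries_lim_ge _ _ xpredT 0%N 1%N _).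
  by rewrite big_nat1 /boxvol big_ord0.
by move=> k _ _; rewrite lee_fin boxvol_ge0.
Qed.

Section P2.
Variables (R : realType) (n : nat).
Notation Rn := 'rV[R]_n.

Lemma ae_and (Om : set Rn) (P Q : Rn -> Prop) :
  ae_in Om P -> ae_in Om Q -> ae_in Om (fun x => P x /\ Q x).
Proof.
move=> [N1 [h1 p1]] [N2 [h2 p2]]; exists (N1 `|` N2); split.
  exact: null_union.
by move=> x ox nx; split; [apply: p1 | apply: p2] => // h; apply: nx; [left|right].
Qed.

Lemma ae_sub (Om Om' : set Rn) (P : Rn -> Prop) :
  Om' `<=` Om -> ae_in Om P -> ae_in Om' P.
Proof. by move=> s [N [h p]]; exists N; split => // x /s; apply: p. Qed.

Lemma ae_impl (Om : set Rn) (P Q : Rn -> Prop) :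
  (forall x, Om x -> P x -> Q x) -> ae_in Om P -> ae_in Om Q.
Proof. by move=> s [N [h p]]; exists N; split => // x ox nx; apply: s => //; apply: p. Qed.

Lemma ae2_sub (Om Om' : set Rn) (P : Rn -> Rn -> Prop) :
  Om' `<=` Om -> ae_in2 Om P -> ae_in2 Om' P.
Proof. by move=> s [N [h p]]; exists N; split => // x y /s ox /s oy; apply: p. Qed.

Lemma sqnorm_coord (x : Rn) i : x ord0 i ^+ 2 <= sqnorm x.
Proof.
rewrite /sqnorm (bigD1 i) //= lerDl; apply: sumr_ge0 => j _; exact: sqr_ge0.
Qed.

Lemma sqnorm_ge0 (x : Rn) : 0 <= sqnorm x.
Proof. by apply: sumr_ge0 => j _; exact: sqr_ge0. Qed.

Lemma eball_box (c : Rn) (r : R) : 0 < r ->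
  eball c r `<=` box (c - const_mx r) (c + const_mx r).
Proof.
move=> r0 y; rewrite /eball /box /= => h i.
have := le_lt_trans (sqnorm_coord (y - c) i) h; rewrite !mxE => hi.
by apply/andP; split; nra.
Qed.

Lemma boxvol_ball (c : Rn) (r : R) : 0 < r ->
  boxvol (c - const_mx r) (c + const_mx r) = (r *+ 2) ^+ n.
Proof.
move=> r0; rewrite /boxvol (eq_bigr (fun _ => r *+ 2)).
  by rewrite prodr_const card_ord.
move=> i _; rewrite !mxE.
rewrite (_ : _ - _ = r *+ 2); last by rewrite mulr2n; lra.
by apply/max_idPl; rewrite mulr2n; lra.
Qed.

Lemma ball_small (n0 : (0 < n)%N) (c : Rn) : (leb_outer (eball c (1/2)) <= 1%:E)%E.
Proof.
have h : (0:R) < 1/2 by lra.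
apply: le_trans (@leb_outer_box R n n0 _ _ _ (@eball_box c (1/2) h)) _.
rewrite boxvol_ball // lee_fin (_ : (1/2) *+ 2 = 1) ?expr1n //. by rewrite mulr2n; lra.
Qed.

End P2.

Section P3.
Variables (R : realType) (n : nat).
Notation Rn := 'rV[R]_n.

Lemma coord_bound (M : R) (x : Rn) i : sqnorm x <= M ->
  -(M + 1) <= x ord0 i <= M + 1.
Proof.
move=> h; have := le_trans (sqnorm_coord x i) h.
have := sqnorm_ge0 x => h0 hi.
by apply/andP; split; nra.
Qed.

Lemma bounded_cover (Om : set Rn) : bounded_Rn Om ->
  exists s : seq Rn, forall x, Om x -> exists2 c, c \in s & eball c (1/2) x.
Proof.
move=> [M hM].
pose K := [set v : Rn | forall i, (`[(- (M + 1)), (M + 1)]%classic : set R) (v ord0 i)].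
have Kc : compact K.
  by apply: (@rV_compact _ _ (fun=> `[(- (M + 1)), (M + 1)]%classic)) => _; apply: segment_compact.
have OK : Om `<=` K.
  move=> x /hM hx i /=; rewrite in_itv /=; exact: coord_bound.
pose d : R := (2 * (n%:R + 1))^-1.
have d0 : 0 < d by rewrite invr_gt0; apply: mulr_gt0 => //; apply: ltr_wpDl.
rewrite compact_cover in Kc.
have [D' _ hD'] : finite_subset_cover setT (fun c : Rn => ball c d) K.
  apply: Kc.
  - by move=> c _; exact: ball_open.
  - by move=> x _; exists x => //; exact: ballxx.
exists (finmap.enum_fset D') => x /OK /hD' [c /= cD hc].
exists c => //.
rewrite /eball /sqnorm.
apply: (@le_lt_trans _ _ (\sum_(i < n) d ^+ 2)).
  apply: ler_sum => i _; rewrite !mxE.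
  have [_ /(_ ord0 i)] := hc; rewrite /ball /= => hi.
  move: hi; rewrite ltr_norml => /andP [h1 h2]; nra.
rewrite big_const_ord iter_addr_0 -mulr_natl.
have hd : d * (2 * (n%:R + 1)) = 1 by rewrite mulVf // mulf_neq0 // gt_eqF // ltr_wpDl.
have n0 : (0:R) <= n%:R by [].
nra.
Qed.

End P3.

Section P4.
Variables (R : realType) (n : nat).
Notation Rn := 'rV[R]_n.
Implicit Types (phi : Rn -> R -> \bar R).

Definition good1 phi x := (0 < phi_inv phi x 1)%E /\ (phi_inv phi x 1 < +oo)%E.

Lemma ae2_impl (Om : set Rn) (P Q : Rn -> Rn -> Prop) :
  (forall x y, Om x -> Om y -> P x y -> Q x y) -> ae_in2 Om P -> ae_in2 Om Q.
Proof.
by move=> s [N [h p]]; exists N; split => // x y ox oy nx ny; apply: s => //; apply: p.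
Qed.

Lemma weak_good1 (Om : set Rn) phi : weak_Phi Om phi -> ae_in Om (good1 phi).
Proof.
move=> [_ [_ [hae _]]]; apply: ae_impl hae => x ox [mono [p0 [small large]]].
split.
- have [d [d0 hd]] := small (1/2) (ltac:(lra) : (0:R) < 1/2).
  apply: (@lt_le_trans _ _ d%:E); first by rewrite lte_fin.
  apply: le_ereal_inf_tmp => _ [t [t0 ht] <-]; rewrite lee_fin.
  rewrite leNgt; apply/negP => td.
  move: t0; rewrite le_eqVlt => /orP [/eqP t0|tpos].
    by move: ht; rewrite -t0 p0 lee_fin; lra.
  by have := le_trans ht (hd t tpos td); rewrite lee_fin; lra.
- have [T hT] := large 1.
  apply: (@le_lt_trans _ _ (Num.max T 0)%:E); last exact: ltry.
  apply: ereal_inf_lbound; exists (Num.max T 0) => //; split.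
    by rewrite le_max lexx orbT.
  by apply: hT; rewrite le_max lexx.
Qed.

Lemma fin_of_good phi x : good1 phi x -> exists u : R, 0 < u /\ phi_inv phi x 1 = u%:E.
Proof.
rewrite /good1; case: (phi_inv phi x 1) => [u| |] [h1 h2] //.
by exists u; split => //; rewrite lte_fin in h1.
Qed.

Lemma bounds_mono (b b' : R) (e : \bar R) : 0 < b -> b <= b' ->
  (b'%:E <= e <= (b'^-1)%:E)%E -> (b%:E <= e <= (b^-1)%:E)%E.
Proof.
move=> b0 bb /andP [h1 h2]; apply/andP; split.
  by apply: le_trans h1; rewrite lee_fin.
apply: (le_trans h2); rewrite lee_fin lef_pV2 ?posrE //.
exact: lt_le_trans bb.
Qed.

Lemma A0_list phi (Om0 : set Rn) (beta : R) : 0 < beta -> beta <= 1 ->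
  (forall c, ae_in2 (Om0 `&` eball c (1/2))
     (fun x y => (beta%:E * phi_inv phi x 1 <= phi_inv phi y 1)%E)) ->
  forall s : seq Rn, forall Om, Om `<=` Om0 -> ae_in Om (good1 phi) ->
  (forall x, Om x -> exists2 c, c \in s & eball c (1/2) x) ->
  exists b : R, (0 < b <= 1) /\
    ae_in Om (fun x => (b%:E <= phi_inv phi x 1 <= (b^-1)%:E)%E).
Proof.
move=> bp0 bp1 hA; elim=> [|c s IH] Om sOm hg hcov.
  exists 1; split; first by rewrite ltr01 lexx.
  by apply: ae_impl hg => x ox _; have [c] := hcov x ox.
pose Om1 := Om `&` eball c (1/2).
pose Om2 := Om `&` ~` eball c (1/2).
have cov2 : forall x, Om2 x -> exists2 c, c \in s & eball c (1/2) x.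
  move=> x [ox nx]; have [c' hc' hx] := hcov x ox.
  move: hc'; rewrite inE => /orP [/eqP ec|hc'].
    by exfalso; apply: nx; rewrite -ec.
  by exists c'.
have [b2 [hb2 ae2]] := IH Om2 (subset_trans (@subIsetl _ _ _) sOm)
   (ae_sub (@subIsetl _ _ _) hg) cov2.
have [b1 [hb1 ae1]] : exists b : R, (0 < b <= 1) /\
    ae_in Om1 (fun x => (b%:E <= phi_inv phi x 1 <= (b^-1)%:E)%E).
  have sub1 : Om1 `<=` Om0 `&` eball c (1/2).
    by move=> x [ox bx]; split => //; apply: sOm.
  have [N1 [hN1 P1]] := ae2_sub sub1 (hA c).
  have [Ng [hNg Pg]] := ae_sub (@subIsetl _ Om (eball c (1/2))) hg.
  case: (pselect (exists y, Om1 y /\ ~ N1 y /\ ~ Ng y)) => [[y [oy [n1y ngy]]]|noy].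
    have [v [v0 hv]] := fin_of_good (Pg y oy ngy).
    exists (Num.min 1 (Num.min (beta * v) (beta / v))).
    split.
      apply/andP; split; last by rewrite ge_min lexx.
      by rewrite !lt_min ltr01 mulr_gt0 //= divr_gt0.
    exists (N1 `|` Ng); split; first exact: null_union.
    move=> x ox nx.
    have n1x : ~ N1 x by move=> h; apply: nx; left.
    have ngx : ~ Ng x by move=> h; apply: nx; right.
    have [u [u0 hu]] := fin_of_good (Pg x ox ngx).
    have hxy := P1 x y ox oy n1x n1y; have hyx := P1 y x oy ox n1y n1x.
    rewrite hu hv -EFinM lee_fin in hxy hyx.
    rewrite hu !lee_fin; apply/andP; split.
      by rewrite ge_min; apply/orP; right; rewrite ge_min -lee_fin EFinM hyx.
    have h1 : u <= (beta / v)^-1.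
      by rewrite invf_div ler_pdivlMr // mulrC.
    apply: le_trans h1 _; rewrite lef_pV2 ?posrE ?divr_gt0 //.
      by rewrite ge_min; apply/orP; right; rewrite ge_min lexx orbT.
    by rewrite !lt_min ltr01 mulr_gt0 //= divr_gt0.
  exists 1; split; first by rewrite ltr01 lexx.
  exists (N1 `|` Ng); split; first exact: null_union.
  move=> x ox nx; exfalso; apply: noy; exists x; split => //.
  by split => h; apply: nx; [left|right].
exists (Num.min b1 b2); split.
  case/andP: hb1 => p1 q1; case/andP: hb2 => p2 q2.
  by rewrite lt_min p1 p2 /= ge_min q1.
have [N1 [hN1 P1]] := ae1; have [N2 [hN2 P2]] := ae2.
have mpos : 0 < Num.min b1 b2.
  by case/andP: hb1 => p1 _; case/andP: hb2 => p2 _; rewrite lt_min p1 p2.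
exists (N1 `|` N2); split; first exact: null_union.
move=> x ox nx.
case: (pselect (eball c (1/2) x)) => hx.
  apply: (@bounds_mono (Num.min b1 b2) b1 _ mpos); first by rewrite ge_min lexx.
  apply: P1; [by split | by move=> h; apply: nx; left].
apply: (@bounds_mono (Num.min b1 b2) b2 _ mpos); first by rewrite ge_min lexx orbT.
apply: P2; [by split | by move=> h; apply: nx; right].
Qed.

End P4.

Section P5.
Variables (R : realType) (n : nat).
Notation Rn := 'rV[R]_n.
Implicit Types (phi : Rn -> R -> \bar R).

Lemma A0_of_A1 (n0 : (0 < n)%N) (Om : set Rn) phi :
  bounded_Rn Om -> weak_Phi Om phi -> cond_A1 Om phi -> cond_A0 Om phi.
Proof.
move=> hb hw [beta [/andP [bp0 bp1] hA]].
have [s hs] := bounded_cover hb.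
have hA' : forall c, ae_in2 (Om `&` eball c (1/2))
     (fun x y => (beta%:E * phi_inv phi x 1 <= phi_inv phi y 1)%E).
  move=> c; have hB : Defs.is_ball (eball c (1/2)).
    by exists c, (1/2); split => //; lra.
  apply: ae2_impl (hA _ hB) => x y _ _ h; apply: h => //.
  by rewrite mul1e; exact: ball_small.
have [b [hb' ae]] := A0_list bp0 bp1 hA' (@subset_refl _ Om) (weak_good1 hw) hs.
by exists b; split.
Qed.

Lemma phi_inv_mono phi x (t1 t2 : R) : t1 <= t2 ->
  (phi_inv phi x t1 <= phi_inv phi x t2)%E.
Proof.
move=> h; apply: ereal_inf_le_tmp => _ [t [t0 ht] <-]; exists t => //; split => //.
by apply: le_trans ht; rewrite lee_fin.
Qed.

Lemma phi_inv_upper phi x (a b sigma tau : R) :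
  (forall t, 0 <= t -> (0 <= phi x t)%E) ->
  (forall s t, 0 <= s -> s <= t -> (phi x s <= phi x t)%E) ->
  almost_increasing_on a [set t | 0 < t] (fun t => phi x t * (t^-1)%:E)%E ->
  1 <= a -> 0 < b -> 0 <= sigma -> tau <= sigma ->
  (phi_inv phi x 1 <= (b^-1)%:E)%E ->
  (phi_inv phi x tau <= (2 / b * (1 + a * sigma))%:E)%E.
Proof.
move=> nn mono ai a1 b0 s0 ts hx.
set s := 2 / b.
have s0' : 0 < s by rewrite divr_gt0.
have bs : b^-1 < s by rewrite /s mulrC ltr_pMr ?invr_gt0 //; lra.
have : (phi_inv phi x 1 < s%:E)%E by apply: le_lt_trans hx _; rewrite lte_fin.
move=> /ereal_inf_lt [_ [t' [t0 ht'] <-]]; rewrite lte_fin => ts'.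
have hs1 : (1%:E <= phi x s)%E := le_trans ht' (mono _ _ t0 (ltW ts')).
set T := s * (1 + a * sigma).
have a0 : 0 < a by lra.
have as0 : 0 < 1 + a * sigma by nra.
have T0 : 0 < T by rewrite mulr_gt0.
have sT : s <= T by rewrite /T ler_peMr ?(ltW s0') //; nra.
have key : (sigma%:E <= phi x T)%E.
  have := ai s T s0' T0 sT.
  case E1: (phi x T) => [p| |]; [| by rewrite leey | by have := nn T (ltW T0); rewrite E1].
  case E2: (phi x s) => [q| |]; last by move: hs1; rewrite E2.
    rewrite -!EFinM lee_fin => h.
    move: hs1; rewrite E2 lee_fin => q1.
    set w := (1 + a * sigma)^-1.
    have w0 : 0 < w by rewrite invr_gt0.
    have hw : (1 + a * sigma) * w = 1 by rewrite mulfV // gt_eqF.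
    have si0 : 0 < s^-1 by rewrite invr_gt0.
    have h1 : q * s^-1 <= (a * p * w) * s^-1.
      by apply: (le_trans h); rewrite /T invfM /w; rewrite le_eqVlt; apply/orP; left; apply/eqP; ring.
    rewrite ler_pM2r // in h1.
    have h2 : q * (1 + a * sigma) <= a * p.
      have := ler_wpM2r (ltW as0) h1.
      by rewrite -!mulrA (mulrC w) hw mulr1.
    rewrite lee_fin; nra.
  by rewrite gt0_mulye ?lte_fin ?invr_gt0 // -!EFinM leye_eq.
apply: ereal_inf_lbound; exists T => //; split; first exact: ltW.
by apply: le_trans key; rewrite lee_fin.
Qed.

Lemma meas_const (n0 : (0 < n)%N) (Om : set Rn) (c : R) :
  leb_measurable Om -> measurable_on Om (fun _ => c).
Proof.
move=> hm a /=.
set S := (X in Om `&` X).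
case: (boolP (c%:E < a%:E)%E) => h.
  rewrite setIidl //; by move=> x _; rewrite /S /=.
have -> : S = set0.
  by apply/seteqP; split => x // /= hx; rewrite hx in h.
rewrite setI0.
by move=> E; rewrite setI0 setC0 setIT leb_outer0 // add0e.
Qed.

Lemma leb_outer_bounded (n0 : (0 < n)%N) (Om : set Rn) :
  bounded_Rn Om -> exists C : R, 0 <= C /\ leb_outer Om = C%:E.
Proof.
move=> [M hM].
have sub : Om `<=` box (const_mx (-(M + 2))) (const_mx (M + 2)).
  move=> x /hM hx i; rewrite !mxE.
  have /andP [h1 h2] := coord_bound i hx.
  by apply/andP; split; lra.
have h := leb_outer_box n0 sub.
have h0 := leb_outer_ge0 Om.
have : leb_outer Om \is a fin_num.
  by rewrite ge0_fin_numE //; apply: le_lt_trans h _; exact: ltry.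
move=> /fineK hf; exists (fine (leb_outer Om)); split => //.
by rewrite -lee_fin hf.
Qed.

Lemma integral_const (n0 : (0 < n)%N) (Om : set Rn) (c : R) :
  bounded_Rn Om -> (leb_integral_nonneg Om (fun _ => c) < +oo)%E.
Proof.
move=> hb; have [C [C0 hC]] := leb_outer_bounded n0 hb.
rewrite /leb_integral_nonneg.
pose E : set R := `]0, c[%classic.
have -> : [set t : R | 0 < t] = `]0, +oo[%classic.
  by apply/seteqP; split => t; rewrite /= in_itv andbT.

rewrite (@eq_integral _ _ _ lebesgue_measure _ (fun t => (C * \1_E t)%:E)); last first.
  move=> t; rewrite inE /= in_itv /= andbT => t0.
  rewrite indicE.
  set S := (X in Om `&` X).
  case: (boolP (t < c)) => h.
    rewrite setIidl; last by move=> x _; rewrite /S /=.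
    by rewrite hC mem_set ?mulr1 // /E /= in_itv /= t0 h.
  have -> : S = set0.
    by apply/seteqP; split => x // /= hx; rewrite hx in h.
  rewrite setI0 leb_outer0 // memNset ?mulr0 // /E /= in_itv /= t0 /=.
  by apply/negP.
have HH := @integralZl_indic _ _ _ lebesgue_measure _ (measurable_itv `]0, +oo[) (fun _ => E) C.
rewrite HH; last 2 first.
  - by move=> hC0; exfalso; lra.
  - exact: measurable_itv.
rewrite integral_indic //; last exact: measurable_itv.
rewrite setIidl; last first.
  by move=> t; rewrite /E /= !in_itv /= => /andP [-> _].
have HL := lebesgue_measure_itv `]0, c[.
move: HL; rewrite /=; case: ifP => _ HL.
  by rewrite /E HL -EFinM ltry.
by rewrite /E HL mule0 ltry.
Qed.

End P5.

Section P6.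
Variables (R : realType) (n : nat).
Notation Rn := 'rV[R]_n.
Implicit Types (phi : Rn -> R -> \bar R).

Lemma A2_of_A0 (n0 : (0 < n)%N) (Om : set Rn) phi :
  bounded_Rn Om -> leb_measurable Om -> weak_Phi Om phi -> cond_A0 Om phi ->
  cond_A2 Om phi.
Proof.
move=> hb hm hw [b0 [/andP [b00 b01] ae0]] sigma s0.
have [nn [_ [aew [a [a1 aeai]]]]] := hw.
pose M := 2 / b0 * (1 + a * sigma).
have M0 : 0 < M by rewrite /M mulr_gt0 ?divr_gt0 //; nra.
exists (Num.min 1 (b0 / M)), (fun _ => 1/2).
have bpos : 0 < Num.min 1 (b0 / M) by rewrite lt_min ltr01 divr_gt0.
split; first by rewrite bpos ge_min lexx.
have hmeas := @meas_const R n n0 Om (1/2) hm.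
split; first by split; [exact: hmeas | exact: (@integral_const R n n0 Om `|1/2| hb)].
split.
  split; first exact: hmeas.
  exists (1/2), set0; split; first exact: leb_outer0.
  by move=> x _ _; rewrite ger0_norm //; lra.
split; first by move=> x _; lra.
have [N [hN P]] := ae_and ae0 (ae_and aew aeai).
exists N; split => // x y ox oy nx ny tau t0 ts.
have [hx [[mono _] hai]] := P x ox nx.
have [hy _] := P y oy ny.
have up := phi_inv_upper (fun t ht => nn x t ox ht) mono hai a1 b00 (ltW s0) ts
  (proj2 (andP hx)).
apply: le_trans (lee_wpmul2l _ up) _; first by rewrite lee_fin ltW.
rewrite -EFinM.
apply: (@le_trans _ _ b0%:E).
  rewrite lee_fin.
  have : Num.min 1 (b0 / M) <= b0 / M by rewrite ge_min lexx orbT.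
  by rewrite ler_pdivlMr.
apply: le_trans (proj1 (andP hy)) _.
by apply: phi_inv_mono; lra.
Qed.

End P6.

Unset Implicit Arguments.

Theorem proposition3p2 (R : realType) (n : nat) (Om : set 'rV[R]_n)
    (phi : 'rV[R]_n -> R -> \bar R) :
  bounded_Rn Om -> leb_measurable Om ->
  weak_Phi Om phi -> cond_A1 Om phi ->
  cond_A0 Om phi /\ cond_A2 Om phi.
Proof.
case: n Om phi => [|n'] Om phi hb hm hw hA.
  exfalso; have [_ [_ [[N [hN _]] _]]] := hw.
  by have := leb_outer_dim0 N; rewrite hN lee_fin ler10.
have n0 : (0 < n'.+1)%N by [].
have h0 := A0_of_A1 n0 hb hw hA.
split; first exact: h0.
exact: (@A2_of_A0 R n'.+1 n0 Om phi hb hm hw h0).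
Qed.
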